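(* Let $n\ge1$, let $a,b$ be positive integers, and let $G$ be a multigraph on $V=\{0,1,\ldots,n\}$ obtained from the complete multigraph $K_{n+1}^{a,b}$ by deleting some (possibly none) of the edges incident to the root $0$; i.e. $G$ has adjacency matrix $[a_{ij}]$ with $a_{0i}=a_{i0}=a_i$ for integers $0\le a_i\le a$ ($i\in[n]$), $a_{ij}=b$ for distinct $i,j\in[n]$, and $a_{ii}=0$. Then $$\dim_{\mathbb K}\left(R_n/\mathcal{M}_G^{(1)}\right)=\det\widetilde Q_G.$$
   Context: $\mathbb K$ is a field, $R_n=\mathbb K[x_1,\ldots,x_n]$. The complete multigraph $K_{n+1}^{a,b}$ on $V$ has $a$ edges between $0$ and each $i\in[n]$ and $b$ edges between each pair of distinct $i,j\in[n]$, no loops. For a loopless multigraph $G$ on $V$ with adjacency matrix $[a_{ij}]$ and $\emptyset\ne A\subseteq[n]$, put $d_A(i)=\sum_{j\in V\setminus A}a_{ij}$ for $i\in A$, $m_A=\prod_{i\in A}x_i^{d_A(i)}$, and $\mathcal{M}_G^{(1)}=\langle m_A:\emptyset\ne A\subseteq[n],\ |A|\le2\rangle$ (explicitly generated by $x_i^{d_i}$ and $x_i^{d_i-a_{ij}}x_j^{d_j-a_{ij}}$ for $i\ne j$ in $[n]$, where $d_i=\sum_{j\in V}a_{ij}$). The truncated signless Laplace matrix $\widetilde Q_G$ is the $n\times n$ matrix indexed by $[n]$ with diagonal entries $d_i$ and off-diagonal entries $a_{ij}$. *)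

(* Defs.v *)
From HB Require Import structures.
From mathcomp Require Import all_boot all_order all_algebra.
From mathcomp Require Import mpoly.
Set Implicit Arguments. Unset Strict Implicit. Unset Printing Implicit Defensive.
Import Order.TTheory GRing.Theory Num.Theory.
Local Open Scope ring_scope.

(* Vertices V = {0,...,n} are 'I_n.+1, root 0 = ord0; vertex i in [n]
   (i : 'I_n, 0-based in Rocq) is [vtx i] = lift ord0 i. Variable x_{i+1} is 'X_i. *)
Definition vtx (n : nat) (i : 'I_n) : 'I_n.+1 := lift ord0 i.

Definition G_adj (n : nat) (ai : 'I_n -> nat) (b : nat) (u v : 'I_n.+1) : nat :=
  if u == v then 0%N
  else match unlift ord0 u, unlift ord0 v with
       | None, Some j => ai j
       | Some i, None => ai i
       | Some _, Some _ => b
       | None, None => 0%N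
       end.

Definition dA (n : nat) (adj : 'I_n.+1 -> 'I_n.+1 -> nat) (A : {set 'I_n}) (i : 'I_n) : nat :=
  (\sum_(j : 'I_n.+1 | j \notin [set vtx k | k : 'I_n in A]) adj (vtx i) j)%N.

Definition mA (K : fieldType) (n : nat) (adj : 'I_n.+1 -> 'I_n.+1 -> nat)
  (A : {set 'I_n}) : {mpoly K[n]} :=
  \prod_(i in A) 'X_i ^+ dA adj A i.

Definition in_M1 (K : fieldType) (n : nat) (adj : 'I_n.+1 -> 'I_n.+1 -> nat)
  (p : {mpoly K[n]}) : Prop :=
  exists c : {set 'I_n} -> {mpoly K[n]},
    p = \sum_(A : {set 'I_n} | (A != set0) && (#|A| <= 2)%N) c A * mA K adj A.

(* dim_K (R_n / I) = d : there are d polynomials whose classes mod I form a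
   K-basis of R_n / I (spanning and linearly independent modulo I). *)
Definition quot_dim_eq (K : fieldType) (n : nat) (I : {mpoly K[n]} -> Prop) (d : nat) : Prop :=
  exists B : 'I_d -> {mpoly K[n]},
    (forall p : {mpoly K[n]}, exists c : 'I_d -> K, I (p - \sum_(k < d) c k *: B k))
    /\ (forall c : 'I_d -> K, I (\sum_(k < d) c k *: B k) -> forall k, c k = 0).

Definition deg (n : nat) (adj : 'I_n.+1 -> 'I_n.+1 -> nat) (i : 'I_n) : nat :=
  (\sum_(j : 'I_n.+1) adj (vtx i) j)%N.

Definition Qtilde (n : nat) (adj : 'I_n.+1 -> 'I_n.+1 -> nat) : 'M[int]_n :=
  \matrix_(i < n, j < n)
    (if i == j then (deg adj i)%:Z else (adj (vtx i) (vtx j))%:Z).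
Arguments mA K [n] adj A.
Arguments in_M1 K [n] adj p.
Arguments quot_dim_eq K [n] I d.

(* Main.v *)
Require Import Defs.
From HB Require Import structures.
From mathcomp Require Import all_boot all_order all_algebra.
From mathcomp Require Import mpoly.
From mathcomp Require Import ring.
Import Order.TTheory GRing.Theory Num.Theory.
Local Open Scope ring_scope.
Set Implicit Arguments. Unset Strict Implicit. Unset Printing Implicit Defensive.

Lemma prod_neq_lift (R : comPzRingType) n (c : 'I_n.+1 -> R) (i : 'I_n) :
  \prod_(j < n.+1 | j != lift ord0 i) c j =
  c ord0 * \prod_(j < n | j != i) c (lift ord0 j).
Proof.
rewrite big_mkcond big_ord_recl /=.
congr (_ * _); rewrite [RHS]big_mkcond; apply: eq_bigr => j _.
by rewrite (inj_eq lift_inj).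
Qed.

Lemma prod_neq0 (R : comPzRingType) n (c : 'I_n.+1 -> R) :
  \prod_(j < n.+1 | j != ord0) c j = \prod_(j < n) c (lift ord0 j).
Proof.
rewrite big_mkcond big_ord_recl /= ?eqxx ?mul1r.
by apply: eq_bigr.
Qed.

Lemma lift0_eq n (i : 'I_n) : (lift ord0 i == ord0) = false.
Proof. by apply/negbTE; rewrite eq_sym neq_lift. Qed.

Lemma lift0_eq' n (i : 'I_n) : (ord0 == lift ord0 i) = false.
Proof. by apply/negbTE; rewrite neq_lift. Qed.

Lemma det_dpc (R : comPzRingType) n (c : 'I_n -> R) (b : R) :
  \det (\matrix_(i, j) (c i * (i == j)%:R + b) : 'M[R]_n) =
  \prod_i c i + b * \sum_i \prod_(j | j != i) c j.
Proof.
elim: n c => [|n IH] c.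
  by rewrite det_mx00 big_ord0 big_ord0 mulr0 addr0.
set M := \matrix_(i, j) _.
pose B : 'M[R]_n.+1 := \matrix_(i, j) (if i == ord0 then (i == j)%:R else M i j).
pose C : 'M[R]_n.+1 := \matrix_(i, j) (if i == ord0 then 1 else M i j).
have -> : \det M = c ord0 * \det B + b * \det C.
  apply: (determinant_multilinear (i0 := ord0)).
  - by apply/rowP => j; rewrite !mxE eqxx mulr1.
  - by apply/matrixP => i j; rewrite !mxE lift0_eq.
  - by apply/matrixP => i j; rewrite !mxE lift0_eq.
have -> : \det B = \det (\matrix_(i, j) (c (lift ord0 i) * (i == j)%:R + b) : 'M[R]_n).
  rewrite (expand_det_row B ord0) big_ord_recl big1 ?addr0; last first.
    by move=> j _; rewrite !mxE eqxx eq_sym lift0_eq mul0r.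
  rewrite !mxE eqxx mul1r /cofactor addn0 expr0 mul1r.
  congr (\det _); apply/matrixP => i j.
  by rewrite !mxE lift0_eq (inj_eq lift_inj).
have -> : \det C = \prod_(j < n) c (lift ord0 j).
  pose L : 'M[R]_n.+1 := \matrix_(i, j) (if j == ord0 then (if i == ord0 then 1 else b) else (i == j)%:R).
  pose U : 'M[R]_n.+1 := \matrix_(i, j) (if i == ord0 then 1 else c i * (i == j)%:R).
  have -> : C = L *m U.
    apply/matrixP => i j; rewrite !mxE big_ord_recl !mxE eqxx.
    rewrite (eq_bigr (fun k => (i == lift ord0 k)%:R * (c (lift ord0 k) * (lift ord0 k == j)%:R))); last first.
      by move=> k _; rewrite !mxE lift0_eq.
    have [->|ni0] := eqVneq i ord0.
      rewrite mulr1 big1 ?addr0 // => k _.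
      by rewrite lift0_eq' mul0r.
    rewrite mulr1; case: (unliftP ord0 i) ni0 => [i'|] -> // _.
    rewrite (bigD1 i') //= eqxx mul1r big1 ?addr0; last first.
      by move=> k nk; rewrite (inj_eq lift_inj) eq_sym (negbTE nk) mul0r.
    by rewrite addrC.
  rewrite det_mulmx.
  have -> : \det L = 1.
    rewrite det_trig; last first.
      apply/forallP => i; apply/forallP => j; apply/implyP => lij.
      rewrite mxE; have [j0|_] := eqVneq j ord0; first by rewrite j0 in lij.
      by rewrite -val_eqE /= (ltn_eqF lij).
    by rewrite big1 // => i _; rewrite mxE eqxx; case: eqP.
  rewrite -det_tr det_trig; last first.
    apply/forallP => i; apply/forallP => j; apply/implyP => lij.
    rewrite !mxE; have [j0|_] := eqVneq j ord0; first by rewrite j0 in lij.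
    by rewrite -val_eqE /= (gtn_eqF lij) mulr0.
  rewrite mul1r big_ord_recl !mxE eqxx mul1r; apply: eq_bigr => i _.
  by rewrite !mxE lift0_eq eqxx mulr1.
rewrite IH big_ord_recl [\sum_(i < n.+1) _]big_ord_recl prod_neq0.
under [X in _ = _ + b * (_ + X)]eq_bigr do rewrite prod_neq_lift.
rewrite -mulr_sumr; ring.
Qed.

Section Ideal.
Variables (K : fieldType) (n : nat) (adj : 'I_n.+1 -> 'I_n.+1 -> nat).

Definition gen (A : {set 'I_n}) : bool := (A != set0) && (#|A| <= 2)%N.
Definition eA (A : {set 'I_n}) : 'X_{1..n} :=
  [multinom (if i \in A then dA adj A i else 0%N) | i < n].
Definition stdm (m : 'X_{1..n}) : bool :=
  [forall A, gen A ==> ~~ (eA A <= m)%MM].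

Lemma mA_eA A : mA K adj A = 'X_[eA A].
Proof.
rewrite mpolyXE_id /mA big_mkcond; apply: eq_bigr => i _.
by rewrite mnmE; case: (i \in A).
Qed.

Lemma mcoeffMX0 (p : {mpoly K[n]}) e m : ~~ (e <= m)%MM -> (p * 'X_[e])@_m = 0.
Proof.
move=> nle; apply/eqP; rewrite mcoeff_eq0; apply: contra nle.
by rewrite (perm_mem (msuppMX p e)) => /mapP [m' _ ->]; exact: lem_addr.
Qed.

Lemma coef_I (p : {mpoly K[n]}) m : in_M1 K adj p -> stdm m -> p@_m = 0.
Proof.
move=> [c ->] /forallP sm; rewrite raddf_sum big1 // => A gA.
by rewrite mA_eA; apply: mcoeffMX0; have := sm A; rewrite /gen gA.
Qed.

Lemma I0 : in_M1 K adj 0.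
Proof. by exists (fun _ => 0); rewrite big1 // => A _; rewrite mul0r. Qed.

Lemma ID p q : in_M1 K adj p -> in_M1 K adj q -> in_M1 K adj (p + q).
Proof.
move=> [c ->] [d ->]; exists (fun A => c A + d A).
by rewrite -big_split; apply: eq_bigr => A _; rewrite mulrDl.
Qed.

Lemma IM q p : in_M1 K adj p -> in_M1 K adj (q * p).
Proof.
move=> [c ->]; exists (fun A => q * c A).
by rewrite mulr_sumr; apply: eq_bigr => A _; rewrite mulrA.
Qed.

Lemma Igen A : gen A -> in_M1 K adj (mA K adj A).
Proof.
move=> gA; exists (fun B => if B == A then 1 else 0).
rewrite (bigD1 A) //= eqxx mul1r big1 ?addr0 // => B /andP [_ nBA].
by rewrite (negbTE nBA) mul0r.
Qed.

Lemma IX m : ~~ stdm m -> in_M1 K adj 'X_[m].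
Proof.
rewrite negb_forall => /existsP [A]; rewrite negb_imply negbK => /andP [gA le].
by rewrite -(submK le) mpolyXD -mA_eA; apply: IM; apply: Igen.
Qed.

Lemma I_of_coef (q : {mpoly K[n]}) : (forall m, stdm m -> q@_m = 0) -> in_M1 K adj q.
Proof.
move=> h; rewrite (mpolyE q) big_seq.
apply: (big_ind (in_M1 K adj)); [exact: I0 | exact: ID |] => m _.
case sm: (stdm m); first by rewrite h // scale0r; exact: I0.
by rewrite -mul_mpolyC; apply: IM; apply: IX; rewrite sm.
Qed.

Lemma mcoeff_sumX d (c : 'I_d -> K) (s : 'I_d -> 'X_{1..n}) m :
  (\sum_(k < d) c k *: 'X_[s k])@_m = \sum_(k < d) c k * (s k == m)%:R.
Proof. by rewrite raddf_sum; apply: eq_bigr => k _ /=; rewrite mcoeffZ mcoeffX. Qed.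

Lemma quot_dim_std d (s : 'I_d -> 'X_{1..n}) :
  injective s -> (forall k, stdm (s k)) -> (forall m, stdm m -> exists k, s k = m) ->
  quot_dim_eq K (in_M1 K adj) d.
Proof.
move=> sinj sstd ssurj; exists (fun k => 'X_[s k]); split.
  move=> p; exists (fun k => p@_(s k)); apply: I_of_coef => m sm.
  have [k0 <-] := ssurj m sm.
  rewrite mcoeffB mcoeff_sumX (bigD1 k0) //= eqxx mulr1 big1 ?addr0 ?subrr //.
  by move=> k nk; rewrite (inj_eq sinj) (negbTE nk) mulr0.
move=> c H k; have := coef_I H (sstd k).
rewrite mcoeff_sumX (bigD1 k) //= eqxx mulr1 big1 ?addr0 //.
by move=> j nj; rewrite (inj_eq sinj) (negbTE nj) mulr0.
Qed.

End Ideal.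


Lemma dA_eq n (adj : 'I_n.+1 -> 'I_n.+1 -> nat) A i :
  dA adj A i = (deg adj i - \sum_(k in A) adj (vtx i) (vtx k))%N.
Proof.
rewrite /deg (bigID (fun j => j \in [set vtx k | k : 'I_n in A])) /=.
rewrite big_imset /=; last by move=> x y _ _; apply: lift_inj.
by rewrite addKn.
Qed.

Section G.
Variables (n : nat) (ai : 'I_n -> nat) (b : nat).
Local Notation adj := (G_adj ai b).

Lemma G_vv i j : adj (vtx i) (vtx j) = if i == j then 0%N else b.
Proof. by rewrite /G_adj /vtx (inj_eq lift_inj) !liftK; case: eqP. Qed.

Lemma G_v0 i : adj (vtx i) ord0 = ai i.
Proof. by rewrite /G_adj /vtx lift0_eq liftK unlift_none. Qed.

Lemma degE i : deg adj i = (ai i + n.-1 * b)%N.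
Proof.
rewrite /deg big_ord_recl G_v0; congr (_ + _)%N.
rewrite (eq_bigr (fun k => if i == k then 0%N else b)); last by move=> k _; exact: G_vv.
rewrite (bigD1 i) //= eqxx add0n.
rewrite (eq_bigr (fun _ => b)); last by move=> k nk; rewrite eq_sym (negbTE nk).
by rewrite sum_nat_const cardC1 card_ord.
Qed.

Lemma eA1 i m : (eA adj [set i] <= m)%MM = (deg adj i <= m i)%N.
Proof.
apply/mnm_lepP/idP => [h | h k].
  by have := h i; rewrite mnmE in_set1 eqxx dA_eq big_set1 G_vv eqxx subn0.
rewrite mnmE in_set1; case: eqP => [->|//].
by rewrite dA_eq big_set1 G_vv eqxx subn0.
Qed.

Lemma eA2 i j m : i != j ->
  (eA adj [set i; j] <= m)%MM = ((deg adj i - b <= m i) && (deg adj j - b <= m j))%N.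
Proof.
move=> nij.
have S k : k \in [set i; j] -> (\sum_(l in [set i; j]) adj (vtx k) (vtx l))%N = b.
  have ni : i \notin [set j] by rewrite in_set1.
  rewrite big_setU1 //= big_set1 !G_vv !inE => /orP [] /eqP ->.
    by rewrite eqxx (negbTE nij).
  by rewrite eqxx eq_sym (negbTE nij) addn0.
have iin : i \in [set i; j] by rewrite !inE eqxx.
have jin : j \in [set i; j] by rewrite !inE eqxx orbT.
apply/mnm_lepP/idP => [h | /andP [hi hj] k].
  have := h i; have := h j; rewrite !mnmE iin jin !dA_eq (S _ iin) (S _ jin).
  by move=> -> ->.
rewrite mnmE; case: ifP => // kin; rewrite dA_eq (S _ kin).
by move: kin; rewrite !inE => /orP [] /eqP ->.
Qed.

Lemma gen_cases (A : {set 'I_n}) : gen A ->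
  (exists i, A = [set i]) \/ (exists i j, i != j /\ A = [set i; j]).
Proof.
case/andP => nA le2.
have : #|A| != 0%N by rewrite cards_eq0.
move: le2; rewrite leq_eqVlt ltnS leq_eqVlt ltnS leqn0 => /or3P [] h.
- by right; apply/cards2P.
- by left; apply/cards1P.
- by rewrite h.
Qed.

Lemma std_char m : stdm adj m =
  [forall i, (m i < deg adj i)%N] &&
  [forall i, forall j, (i != j) ==> ~~ ((deg adj i - b <= m i) && (deg adj j - b <= m j))%N].
Proof.
apply/forallP/andP => [h | [/forallP h1 /forallP h2] A].
  split.
    apply/forallP => i; have := h [set i].
    by rewrite /gen cards1 -card_gt0 cards1 /= eA1 ltnNge.
  apply/forallP => i; apply/forallP => j; apply/implyP => nij.
  have := h [set i; j]; rewrite eA2 // /gen cards2 nij.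
  have -> : [set i; j] != set0 by apply/set0Pn; exists i; rewrite !inE eqxx.
  by [].
apply/implyP => /gen_cases [[i ->] | [i [j [nij ->]]]].
  by rewrite eA1 -ltnNge.
by rewrite eA2 //; have := h2 i => /forallP /(_ j); rewrite nij.
Qed.

End G.
Section CNat.
Local Open Scope nat_scope.

Lemma pointwise n (E D u : 'I_n -> nat) : (forall i, E i <= D i) ->
  nat_of_bool ([forall i, u i < D i] &&
    [forall i, forall j, (i != j) ==> ~~ ((E i <= u i) && (E j <= u j))])
  = nat_of_bool [forall i, u i < E i] +
    \sum_i nat_of_bool [forall j, if j == i then (E i <= u j < D i) else u j < E j].
Proof.
move=> ED.
case h0: [forall i, u i < E i].
  rewrite big1; last first.
    move=> i _; apply/eqP; rewrite eqb0; apply/negP => /forallP /(_ i).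
    by rewrite eqxx leqNgt (forallP h0 i).
  rewrite addn0; congr nat_of_bool; apply/andP; split.
    by apply/forallP => i; apply: leq_trans (forallP h0 i) (ED i).
  apply/forallP => i; apply/forallP => j; apply/implyP => _.
  by rewrite leqNgt (forallP h0 i).
move/negbT: h0; rewrite negb_forall => /existsP [i0]; rewrite -leqNgt => hi0.
rewrite add0n (bigD1 i0) //= big1 ?addn0; last first.
  move=> i ni; apply/eqP; rewrite eqb0; apply/negP => /forallP /(_ i0).
  by rewrite eq_sym (negbTE ni) ltnNge hi0.
congr nat_of_bool; apply/idP/idP.
  case/andP => /forallP h1 /forallP h2; apply/forallP => j.
  case: eqP => [->|/eqP nj]; first by rewrite hi0 h1.
  rewrite ltnNge; apply/negP => hj.
  by have := h2 i0 => /forallP /(_ j); rewrite eq_sym nj hi0 hj.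
move/forallP => h; apply/andP; split.
  apply/forallP => i; have := h i; case: eqP => [->|_]; first by case/andP.
  by move=> hi; apply: leq_trans hi (ED i).
apply/forallP => i; apply/forallP => j; apply/implyP => nij.
have [ei|ni] := eqVneq i i0.
  have := h j; rewrite -ei eq_sym (negbTE nij) => hj.
  by rewrite [E j <= _]leqNgt hj andbF.
by have := h i; rewrite (negbTE ni) => hi; rewrite leqNgt hi.
Qed.

Lemma card_range N lo hi : lo <= hi -> hi <= N ->
  #|[pred k : 'I_N | lo <= k < hi]| = hi - lo.
Proof.
move=> lh hN; rewrite -sum1_card big_mkcond /=.
rewrite -(big_mkord xpredT (fun k => if lo <= k < hi then 1 else 0)).
rewrite (big_cat_nat (leq0n hi) hN) /= [X in _ + X]big1_seq ?addn0; last first.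
  by move=> k; rewrite mem_index_iota => /and3P [_ hk _]; case: ifP => // /andP [_]; rewrite ltnNge hk.
rewrite (big_cat_nat (leq0n lo) lh) /= big1_seq ?add0n; last first.
  by move=> k; rewrite mem_index_iota => /and3P [_ _ hk]; case: ifP => // /andP []; rewrite leqNgt hk.
rewrite big_seq_cond (eq_bigr (fun _ => 1)); last first.
  by move=> k /andP [];  rewrite mem_index_iota => -> .
by rewrite -big_seq_cond big_const_nat iter_addn_0 mul1n.
Qed.

Lemma card_fam n N (F : 'I_n -> pred 'I_N) :
  #|[pred f : {ffun 'I_n -> 'I_N} | [forall i, f i \in F i]]| = \prod_i #|F i|.
Proof.
rewrite -(eq_card (A := family F)); last by move=> f; apply/familyP/forallP.
rewrite card_family /= /image_mem foldrE big_map big_enum /=; exact: eq_bigl.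
Qed.

End CNat.

Lemma card_sumb (T : finType) (A : pred T) : #|A| = (\sum_x nat_of_bool (A x))%N.
Proof. by rewrite -sum1_card big_mkcond; apply: eq_bigr => x _; rewrite -topredE /=; case: (A x). Qed.

Section Count.
Local Open Scope nat_scope.
Variables (n N : nat) (E D : 'I_n -> nat).
Hypothesis ED : forall i, (E i <= D i)%N.
Hypothesis DN : forall i, (D i <= N)%N.

Lemma count_std :
  #|[pred f : {ffun 'I_n -> 'I_N} | [forall i, f i < D i] &&
    [forall i, forall j, (i != j) ==> ~~ ((E i <= f i) && (E j <= f j))]]|%N
  = (\prod_i E i + \sum_i (D i - E i) * \prod_(j | j != i) E j)%N.
Proof.
rewrite card_sumb.
under eq_bigr do rewrite /= (pointwise _ ED).
rewrite big_split /= exchange_big /=.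
congr (_ + _)%N.
  rewrite -(card_sumb [pred f : {ffun 'I_n -> 'I_N} | [forall i, f i \in [pred k : 'I_N | k < E i]]]).
  rewrite card_fam; apply: eq_bigr => i _.
  rewrite -[RHS]subn0 -(card_range (N := N) (leq0n (E i)) (leq_trans (ED i) (DN i))).
  by apply: eq_card => k; rewrite !inE.
apply: eq_bigr => i _.
rewrite -(card_sumb [pred f : {ffun 'I_n -> 'I_N} | [forall j, f j \in
   [pred k : 'I_N | if j == i then (E i <= k < D i) else k < E j]]]).
rewrite card_fam (bigD1 i) //=; congr (_ * _)%N.
  rewrite -(card_range (N := N) (ED i) (DN i)); apply: eq_card => k.
  by rewrite !inE eqxx.
apply: eq_bigr => j nj.
rewrite -[RHS]subn0 -(card_range (N := N) (leq0n (E j)) (leq_trans (ED j) (DN j))).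
by apply: eq_card => k; rewrite !inE (negbTE nj).
Qed.
End Count.

Unset Implicit Arguments.
Theorem theorem1 (K : fieldType) (n : nat) (hn : (1 <= n)%N) (a b : nat)
  (ha : (0 < a)%N) (hb : (0 < b)%N) (ai : 'I_n -> nat)
  (hai : forall i, (ai i <= a)%N) :
  exists d : nat,
    quot_dim_eq K (in_M1 K (G_adj ai b)) d /\
    (d%:Z = \det (Qtilde (G_adj ai b))).
Proof.
set adj := G_adj ai b.
pose D i := deg adj i.
pose E i := (D i - b)%N.
pose N := (\sum_i D i)%N.
have ED i : (E i <= D i)%N by rewrite leq_subr.
have DN i : (D i <= N)%N by rewrite /N (bigD1 i) //= leq_addr.
pose mon (f : {ffun 'I_n -> 'I_N}) : 'X_{1..n} := [multinom (val (f i)) | i < n].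
have monE f i : mon f i = val (f i) by rewrite mnmE.
pose S := [set f | stdm adj (mon f)].
exists #|S|; split.
  apply: (@quot_dim_std K n adj #|S| (fun k => mon (enum_val k))).
  - move=> k1 k2 /mnmP h; apply: enum_val_inj; apply/ffunP => i; apply: val_inj.
    by have := h i; rewrite !monE.
  - by move=> k; have := enum_valP k; rewrite inE.
  move=> m sm.
  have hm i : (m i < D i)%N.
    by move: sm; rewrite std_char => /andP [/forallP h _]; exact: h.
  pose f : {ffun 'I_n -> 'I_N} := [ffun i => Ordinal (leq_trans (hm i) (DN i))].
  have mf : mon f = m by apply/mnmP => i; rewrite monE ffunE.
  have fS : f \in S by rewrite inE mf.
  by exists (enum_rank_in fS f); rewrite enum_rankK_in.
have -> : #|S| = (\prod_i E i + \sum_i (D i - E i) * \prod_(j | j != i) E j)%N.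
  rewrite -(count_std ED DN); apply: eq_card => f.
  rewrite inE std_char [in RHS]inE /=; congr (_ && _).
    by apply: eq_forallb => i; rewrite monE.
  by apply: eq_forallb => i; apply: eq_forallb => j; rewrite !monE.
move: hn; rewrite leq_eqVlt => /orP [/eqP n1 | n2].
  subst n; rewrite det_mx11 /Qtilde mxE eqxx !big_ord1.
  have -> : (\prod_(j < 1 | j != ord0) E j = 1)%N.
    by rewrite big_pred0 // => j; rewrite (ord1 j) eqxx.
  by rewrite muln1 subnKC.
have bD i : (b <= D i)%N.
  rewrite /D /adj degE; apply: leq_trans (leq_addl _ _).
  by rewrite leq_pmull // -ltnS prednK // ltnW.
have DmE i : (D i - E i = b)%N by rewrite /E subKn.
have -> : Qtilde adj = \matrix_(i, j) ((E i)%:Z * (i == j)%:R + b%:Z).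
  apply/matrixP => i j; rewrite !mxE; case: eqP => [->|/eqP nij].
    by rewrite mulr1 -PoszD subnK.
  by rewrite /adj G_vv (negbTE nij) mulr0 add0r.
rewrite det_dpc.
have -> : (\sum_i (D i - E i) * \prod_(j | j != i) E j = \sum_i b * \prod_(j | j != i) E j)%N by apply: eq_bigr => i _; rewrite DmE.
rewrite -!natz natrD natr_prod natr_sum mulr_sumr; congr (_ + _).
  by apply: eq_bigr => i _; rewrite natz.
apply: eq_bigr => i _; rewrite natrM natr_prod; congr (_ * _).
by apply: eq_bigr => j _; rewrite natz.
Qed.
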